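(* Let $\mathcal{L}_1,\mathcal{L}_2\in\mathrm{Mat}_d(\mathbb{Z})$ be irreducible and coprime, and let $\Lambda=\mathbb{Z}^d\cap \mathcal{L}_1^{-1}\mathcal{L}_2 \mathbb{Z}^d\cap \mathcal{L}_2^{-1}\mathcal{L}_1 \mathbb{Z}^d$, $\Gamma_1=\Lambda\cap \mathcal{L}_2^{-1}\mathcal{L}_1\Lambda$, $G=\mathbb{Z}^d/\Gamma_1$, and $\phi_1,\phi_2:G\to\mathbb{Z}^d/\mathcal{L}_1\Lambda$ the homomorphisms $\phi_i(x+\Gamma_1)=\mathcal{L}_ix+\mathcal{L}_1\Lambda$. Let $X\subseteq G$ with $0\in X$. Then at least one of the following holds: (1) $X$ does not generate $G$; (2) $|\phi_1(X)+\phi_2(X)|>|X|$; (3) $\Lambda/\Gamma_1\subseteq X$.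
   Context: Irreducible: there are no non-trivial subspaces $U,V$ of $\mathbb{Q}^d$ of the same dimension with $\mathcal{L}_1U\subseteq V$ and $\mathcal{L}_2U\subseteq V$. Coprime: there are no $\mathcal{P},\mathcal{Q}\in \mathrm{GL}_d(\mathbb{Q})$ with $0<|\det(\mathcal{P})\det(\mathcal{Q})|<1$ such that $\mathcal{P}\mathcal{L}_1\mathcal{Q},\mathcal{P}\mathcal{L}_2\mathcal{Q}\in\mathrm{Mat}_d(\mathbb{Z})$. The maps $\phi_1,\phi_2$ are well defined and $\phi_1+\phi_2$ is an isomorphism. *)

(* Defs.v *)
From HB Require Import structures.
From mathcomp Require Import all_boot all_order all_algebra.
From mathcomp Require Import boolp classical_sets cardinality.
Set Implicit Arguments. Unset Strict Implicit. Unset Printing Implicit Defensive.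
Import Order.TTheory GRing.Theory Num.Theory.
Local Open Scope ring_scope.
Local Open Scope classical_set_scope.

Notation Zvec d := 'cV[int]_d.

Definition ratmx (m n : nat) (A : 'M[int]_(m, n)) : 'M[rat]_(m, n) :=
  map_mx (fun z : int => z%:~R) A.

(* Subspaces are row spaces of matrices
   (mxalgebra convention); a column vector u is mapped to L u, i.e. the row
   vector u^T to u^T *m L^T. *)
Definition irreducible_pair (d : nat) (L1 L2 : 'M[int]_d) : Prop :=
  ~ exists U V : 'M[rat]_d,
      [/\ \rank U = \rank V, (0 < \rank U)%N, (\rank U < d)%N,
          (U *m (ratmx L1)^T <= V)%MS & (U *m (ratmx L2)^T <= V)%MS].

Definition coprime_pair (d : nat) (L1 L2 : 'M[int]_d) : Prop :=
  ~ exists P Q : 'M[rat]_d,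
      [/\ P \in unitmx, Q \in unitmx,
          0 < `|\det P * \det Q| < 1,
          exists M1 : 'M[int]_d, P *m ratmx L1 *m Q = ratmx M1 &
          exists M2 : 'M[int]_d, P *m ratmx L2 *m Q = ratmx M2].

Definition Lambda (d : nat) (L1 L2 : 'M[int]_d) : set (Zvec d) :=
  [set x | (exists y, L1 *m x = L2 *m y) /\ (exists z, L2 *m x = L1 *m z)].

Definition Gamma1 (d : nat) (L1 L2 : 'M[int]_d) : set (Zvec d) :=
  [set x | Lambda L1 L2 x /\ exists w, Lambda L1 L2 w /\ L2 *m x = L1 *m w].

Definition L1Lambda (d : nat) (L1 L2 : 'M[int]_d) : set (Zvec d) :=
  [set L1 *m w | w in Lambda L1 L2].

Definition coset (d : nat) (H : set (Zvec d)) (x : Zvec d) : set (Zvec d) :=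
  [set x + h | h in H].

Definition cosets (d : nat) (H S : set (Zvec d)) : set (set (Zvec d)) :=
  [set coset H x | x in S].

(* A subset of G = Z^d / H is represented by its preimage in Z^d, i.e. an
   H-saturated subset of Z^d. *)
Definition saturated (d : nat) (H X : set (Zvec d)) : Prop :=
  forall x h, X x -> H h -> X (x + h).

(* X generates Z^d / H: every subgroup of Z^d / H (= subgroup of Z^d
   containing H) containing (the image of) X is everything. *)
Definition generates_quot (d : nat) (H X : set (Zvec d)) : Prop :=
  forall K : set (Zvec d),
    K 0 -> (forall a b, K a -> K b -> K (a - b)) ->
    H `<=` K -> X `<=` K -> K = setT.

Definition phi_sumset (d : nat) (L1 L2 : 'M[int]_d) (X : set (Zvec d))
  : set (set (Zvec d)) :=
  cosets (L1Lambda L1 L2) [set L1 *m x + L2 *m y | x in X & y in X].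

(* Main.v *)
Require Import Defs.
From HB Require Import structures.
From mathcomp Require Import all_boot all_order all_algebra.
From mathcomp Require Import boolp classical_sets cardinality.
From mathcomp Require Import ring zify finmap.
Import Order.TTheory GRing.Theory Num.Theory.
Local Open Scope ring_scope.
Local Open Scope classical_set_scope.
Local Open Scope card_scope.
Set Implicit Arguments. Unset Strict Implicit. Unset Printing Implicit Defensive.

Lemma sz_sub (T : choiceType) (A B : set T) : finite_set B -> A `<=` B ->
  ((#|` fset_set A|)%fset <= (#|` fset_set B|)%fset)%N.
Proof.
move=> fB AB; have fA := sub_finite_set AB fB.
by apply: fsubset_leq_card; have := AB; rewrite fset_set_sub.
Qed.

Lemma sz_eq (T : choiceType) (A B : set T) : finite_set B -> A `<=` B ->
  ((#|` fset_set B|)%fset <= (#|` fset_set A|)%fset)%N -> B `<=` A.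
Proof.
move=> fB AB le; have fA := sub_finite_set AB fB.
have /eqP e : fset_set A == fset_set B.
  by rewrite eqEfcard le andbT; have := AB; rewrite fset_set_sub.
move=> x Bx; have : x \in fset_set B by rewrite in_fset_set // in_setE.
by rewrite -e in_fset_set // in_setE.
Qed.

Lemma card_le_sub (T : choiceType) (A B : set T) : finite_set A -> A `<=` B ->
  B #<= A -> B `<=` A.
Proof.
move=> fA AB BA; have fB := card_le_finite BA fA.
apply: sz_eq => //; have /finite_setP[n An] := fA.
rewrite (card_fset_set An); apply: geq_card_fset_set.
by rewrite -(card_le_eqr An).
Qed.

Lemma stab_chain (T : choiceType) (C : nat -> set T) : finite_set (C 0%N) ->
  (forall k, C k.+1 `<=` C k) -> exists n, C n `<=` C n.+1.
Proof.
move=> f0 dec; case: (pselect (exists n, C n `<=` C n.+1)) => // Hno.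
have fin k : finite_set (C k).
  elim: k => // k IH; exact: sub_finite_set (dec k) IH.
have lt k : ((#|` fset_set (C k.+1)|)%fset < (#|` fset_set (C k)|)%fset)%N.
  rewrite ltnNge; apply/negP => le; apply: Hno; exists k.
  exact: sz_eq (fin k) (dec k) le.
have key k : ((#|` fset_set (C k)|)%fset + k <= (#|` fset_set (C 0%N)|)%fset)%N.
  elim: k => [|k IH]; first by rewrite addn0.
  by apply: leq_trans IH; rewrite addnS -addSn leq_add2r; exact: (lt k).
by have := key ((#|` fset_set (C 0%N)|)%fset).+1; rewrite addnS ltnNge leq_addl.
Qed.

Definition subgrp (d : nat) (H : set (Zvec d)) :=
  H 0 /\ forall a b, H a -> H b -> H (a - b).

Lemma sgN d (H : set (Zvec d)) : subgrp H -> forall a, H a -> H (- a).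
Proof. by move=> [h0 hB] a ha; rewrite -sub0r; apply: hB. Qed.

Lemma sgD d (H : set (Zvec d)) : subgrp H -> forall a b, H a -> H b -> H (a + b).
Proof. by move=> hH a b ha hb; rewrite -[b]opprK; apply: hH.2 => //; apply: sgN. Qed.

Lemma coset_eqP d (H : set (Zvec d)) x y : subgrp H ->
  coset H x = coset H y <-> H (x - y).
Proof.
move=> hH; split=> [e|hxy].
  have : coset H x x by exists 0; [exact: hH.1| rewrite addr0].
  by rewrite e => -[h hh <-]; rewrite addrC addKr.
apply/seteqP; split=> v [h hh <-].
  by exists (x - y + h); [apply: sgD | rewrite addrA [y + _]addrC addrNK].
exists (- (x - y) + h); first by apply: sgD => //; apply: sgN.
by rewrite addrA opprB [x + _]addrC addrNK.
Qed.

Ltac zmodtac := apply/matrixP=> ? ?; rewrite !mxE; ring.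

Lemma Lam_sg d (L1 L2 : 'M[int]_d) : subgrp (Lambda L1 L2).
Proof.
split; first by split; exists 0; rewrite !mulmx0.
move=> a b [[ya ea] [za fa]] [[yb eb] [zb fb]]; split.
  by exists (ya - yb); rewrite !mulmxBr ea eb.
by exists (za - zb); rewrite !mulmxBr fa fb.
Qed.

Lemma G1_sg d (L1 L2 : 'M[int]_d) : subgrp (Gamma1 L1 L2).
Proof.
have [l0 lB] := Lam_sg L1 L2.
split; first by split => //; exists 0; split => //; rewrite !mulmx0.
move=> a b [la [wa [hwa ea]]] [lb [wb [hwb eb]]]; split; first exact: lB.
by exists (wa - wb); split; [exact: lB | rewrite !mulmxBr ea eb].
Qed.

Lemma M_sg d (L1 L2 : 'M[int]_d) : subgrp (L1Lambda L1 L2).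
Proof.
have [l0 lB] := Lam_sg L1 L2.
split; first by exists 0 => //; rewrite mulmx0.
move=> a b [wa ha <-] [wb hb <-]; exists (wa - wb); first exact: lB.
by rewrite mulmxBr.
Qed.

Lemma G1_M d (L1 L2 : 'M[int]_d) g : Gamma1 L1 L2 g ->
  L1Lambda L1 L2 (L1 *m g) /\ L1Lambda L1 L2 (L2 *m g).
Proof.
move=> [hl [w [hw e]]]; split; first by exists g.
by exists w.
Qed.

Lemma psi_inj d (L1 L2 : 'M[int]_d) x :
  L1Lambda L1 L2 (L1 *m x + L2 *m x) -> Gamma1 L1 L2 x.
Proof.
move=> [l [[y ey] [z ez]] e].
have e1 : L1 *m (l - x) = L2 *m x by rewrite mulmxBr e addrAC subrr add0r.
split; first split.
- by exists (y - x); rewrite mulmxBr -ey e addrK.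
- by exists (l - x).
exists (l - x); split => //; split; first by exists x.
exists (z - l + x); rewrite !(mulmxBr, mulmxDr, mulmxN) -ez e.
zmodtac.
Qed.

Lemma Lam_scale d (L1 L2 : 'M[int]_d) v :
  Lambda L1 L2 ((\det L1 * \det L2) *: v).
Proof.
split.
  exists (\det L1 *: (\adj L2 *m (L1 *m v))).
  rewrite !scalemxAr (mulmxA L2) mul_mx_adj mul_scalar_mx !scalemxAr !scalerA.
  by first [done | rewrite mulrC].

exists (\det L2 *: (\adj L1 *m (L2 *m v))).
rewrite !scalemxAr (mulmxA L1) mul_mx_adj mul_scalar_mx !scalemxAr !scalerA.
by first [done | rewrite mulrC].
Qed.

Lemma G1_scale d (L1 L2 : 'M[int]_d) v :
  let c := \det L1 * \det L2 in Gamma1 L1 L2 ((c * c) *: v).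
Proof.
move=> c; rewrite -scalerA; split; first exact: Lam_scale.
exists (c *: (\det L2 *: (\adj L1 *m (L2 *m v)))); split; first exact: Lam_scale.
rewrite !scalemxAr (mulmxA L1) mul_mx_adj mul_scalar_mx !scalemxAr !scalerA.
by congr (_ *m (_ *: _)); rewrite /c; ring.
Qed.
Lemma cosets_fin d (L1 L2 : 'M[int]_d) (S : set (Zvec d)) :
  \det L1 != 0 -> \det L2 != 0 -> finite_set (cosets (Gamma1 L1 L2) S).
Proof.
move=> n1 n2; set c := \det L1 * \det L2; set c2 := c * c.
have c2gt0 : 0 < c2 by rewrite /c2 lt0r sqr_ge0 andbT mulf_neq0 // mulf_neq0.
set K := absz c2.
have H z : (absz (z %% c2)%Z < K)%N.
  have h1 := modz_ge0 z (lt0r_neq0 c2gt0); have h2 := ltz_pmod z c2gt0.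
  rewrite /K; lia.
pose emb (r : 'cV['I_K]_d) : Zvec d := map_mx (fun i : 'I_K => (i : nat)%:Z) r.
apply: (sub_finite_set (B := (fun r => coset (Gamma1 L1 L2) (emb r)) @` setT)).
  move=> C [x _ <-].
  pose r : 'cV['I_K]_d := \matrix_(i, j) Ordinal (H (x i j)).
  exists r => //; apply/coset_eqP; first exact: G1_sg.
  have -> : emb r - x = c2 *: (- \matrix_(i, j) (x i j %/ c2)%Z).
    apply/matrixP => i j; rewrite !mxE /=.
    have h1 := modz_ge0 (x i j) (lt0r_neq0 c2gt0); have := divz_eq (x i j) c2.
    lia.
  exact: G1_scale.
by apply: finite_image; exact: finite_finset.
Qed.

Lemma irr_sym d (L1 L2 : 'M[int]_d) :
  irreducible_pair L1 L2 -> irreducible_pair L2 L1.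
Proof.
by move=> h [U [V [r1 r2 r3 s1 s2]]]; apply: h; exists U, V; split.
Qed.

Lemma irr_det d (L1 L2 : 'M[int]_d) :
  irreducible_pair L1 L2 -> (1 < d)%N -> \det L1 != 0.
Proof.
move=> hirr d2; apply/negP => /eqP h0; apply: hirr.
set A := (ratmx L1)^T.
have hA : \det A = 0 by rewrite det_tr /ratmx det_map_mx h0.
have rA : (\rank A < d)%N.
  rewrite ltn_neqAle rank_leq_row andbT; apply/negP => /eqP rf.
  have : A \in unitmx by rewrite -row_free_unit /row_free rf.
  by rewrite unitmxE hA unitr0.
set K := kermx A.
have Kn0 : K != 0.
  by rewrite -mxrank_eq0 mxrank_ker -lt0n subn_gt0.
have [i0 hi0] : exists i0, row i0 K != 0.
  case: (pselect (exists i0, row i0 K != 0)) => // hn.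
  move/negP: Kn0; case; apply/eqP/row_matrixP => i; rewrite row0.
  by apply/eqP; apply: contrapT => hi; apply: hn; exists i; apply/negP.
set U := delta_mx i0 i0 *m K.
have Un0 : U != 0.
  apply: contra hi0 => /eqP U0.
  by rewrite rowE -(mul_delta_mx i0) -mulmxA -/U U0 mulmx0.
have rU : \rank U = 1%N.
  apply/eqP; rewrite eqn_leq; apply/andP; split.
    by apply: leq_trans (mxrankM_maxl _ _) _; rewrite mxrank_delta.
  by rewrite lt0n mxrank_eq0.
have UA : U *m A = 0 by rewrite /U -mulmxA mulmx_ker mulmx0.
set W := U *m (ratmx L2)^T.
exists U, (if W == 0 then U else W); split; rewrite ?rU //.
- case: eqP => [//|/eqP Wn0]; apply/eqP; rewrite eqn_leq; apply/andP; split.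
    by rewrite ?rU lt0n mxrank_eq0.
  by apply: leq_trans (mxrankM_maxl _ _) _; rewrite ?rU.
- by rewrite UA sub0mx.
- by rewrite -/W; case: eqP => [->|_]; rewrite ?sub0mx ?submx_refl.
Qed.

Lemma det_sing01 d (L : 'M[int]_d) : (d <= 1)%N -> \det L = 0 -> L = 0.
Proof.
case: d L => [|[|//]] L _ h.
  by apply/matrixP => [[]].
apply/matrixP => i j; rewrite !ord1 mxE; move: h.
by rewrite (expand_det_row _ ord0) big_ord1 /cofactor det_mx00 expr0 mul1r mulr1 => ->.
Qed.

Definition psi d (L1 L2 : 'M[int]_d) (x : Zvec d) := L1 *m x + L2 *m x.
Definition eqG d (L1 L2 : 'M[int]_d) (a b : Zvec d) := Gamma1 L1 L2 (a - b).

Lemma psiB d (L1 L2 : 'M[int]_d) a b : psi L1 L2 (a - b) = psi L1 L2 a - psi L1 L2 b.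
Proof. rewrite /psi !mulmxBr; zmodtac. Qed.

Lemma psiD d (L1 L2 : 'M[int]_d) a b : psi L1 L2 (a + b) = psi L1 L2 a + psi L1 L2 b.
Proof. rewrite /psi !mulmxDr; zmodtac. Qed.

Lemma psi0 d (L1 L2 : 'M[int]_d) : psi L1 L2 0 = 0.
Proof. by rewrite /psi !mulmx0 addr0. Qed.

Lemma eqG_M d (L1 L2 : 'M[int]_d) a b :
  eqG L1 L2 a b <-> L1Lambda L1 L2 (psi L1 L2 a - psi L1 L2 b).
Proof.
split => [h|h]; last by apply: psi_inj; rewrite -/(psi _ _ _) psiB.
have [h1 h2] := G1_M h; rewrite -psiB /psi; exact: sgD (M_sg _ _) _ _ h1 h2.
Qed.

Lemma eqG_refl d (L1 L2 : 'M[int]_d) a : eqG L1 L2 a a.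
Proof. by rewrite /eqG subrr; exact: (G1_sg _ _).1. Qed.

Lemma eqG_sym d (L1 L2 : 'M[int]_d) a b : eqG L1 L2 a b -> eqG L1 L2 b a.
Proof. by move=> h; rewrite /eqG -opprB; apply: sgN (G1_sg _ _) _ h. Qed.

Lemma eqG_trans d (L1 L2 : 'M[int]_d) a b c :
  eqG L1 L2 a b -> eqG L1 L2 b c -> eqG L1 L2 a c.
Proof.
move=> h1 h2; rewrite /eqG (_ : a - c = (a - b) + (b - c)); last by rewrite addrA addrNK.
exact: sgD (G1_sg _ _) _ _ h1 h2.
Qed.

Lemma eqG_add d (L1 L2 : 'M[int]_d) a b c e :
  eqG L1 L2 a b -> eqG L1 L2 c e -> eqG L1 L2 (a + c) (b + e).
Proof.
move=> h1 h2; rewrite /eqG (_ : a + c - (b + e) = (a - b) + (c - e)); last zmodtac.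
exact: sgD (G1_sg _ _) _ _ h1 h2.
Qed.

Lemma eqG_sub d (L1 L2 : 'M[int]_d) a b c e :
  eqG L1 L2 a b -> eqG L1 L2 c e -> eqG L1 L2 (a - c) (b - e).
Proof.
move=> h1 h2; rewrite /eqG (_ : a - c - (b - e) = (a - b) - (c - e)); last zmodtac.
exact: (G1_sg _ _).2 _ _ h1 h2.
Qed.

Lemma sat_eqG d (L1 L2 : 'M[int]_d) (X : set (Zvec d)) a b :
  saturated (Gamma1 L1 L2) X -> X a -> eqG L1 L2 b a -> X b.
Proof. by move=> hs Xa h; rewrite -(addrNK a b) addrC; apply: hs. Qed.

Lemma card_step d (L1 L2 : 'M[int]_d) (X : set (Zvec d)) :
  \det L1 != 0 -> \det L2 != 0 ->
  card_le (phi_sumset L1 L2 X) (cosets (Gamma1 L1 L2) X) ->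
  forall x y, X x -> X y -> exists z, X z /\
    L1Lambda L1 L2 (L1 *m x + L2 *m y - psi L1 L2 z).
Proof.
move=> n1 n2 hcard.
set M := L1Lambda L1 L2; set G := Gamma1 L1 L2.
have Msg : subgrp M := M_sg L1 L2.
have Gsg : subgrp G := G1_sg L1 L2.
pose F (C : set (Zvec d)) : set (Zvec d) :=
  [set v | exists2 x, C x & M (v - psi L1 L2 x)].
have hF x : F (coset G x) = coset M (psi L1 L2 x).
  apply/seteqP; split => v.
    move=> [x' [h hh <-] hm]; exists (v - psi L1 L2 x); last first.
      by rewrite addrC addrNK.
    have hpsi : M (psi L1 L2 h) by have [a b] := G1_M hh; exact: sgD a b.
    rewrite (_ : v - psi L1 L2 x = (v - psi L1 L2 (x + h)) + psi L1 L2 h).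
      exact: sgD.
    by rewrite psiD; zmodtac.
  move=> [m hm <-]; exists x; first by exists 0; [exact: Gsg.1 | rewrite addr0].
  by rewrite addrC addKr.
have Finj : {in cosets G X &, injective F}.
  move=> C1 C2 /set_mem [x1 _ <-] /set_mem [x2 _ <-]; rewrite !hF.
  move/(coset_eqP _ _ Msg) => h; apply/(coset_eqP _ _ Gsg).
  by apply: (proj2 (eqG_M L1 L2 x1 x2)).
have FP : F @` cosets G X = cosets M (psi L1 L2 @` X).
  apply/seteqP; split => v.
    by move=> [C [x Xx <-] <-]; rewrite hF; exists (psi L1 L2 x) => //; exists x.
  by move=> [w [x Xx <-] <-]; exists (coset G x); [exists x | rewrite hF].
have fin : finite_set (cosets G X) by exact: cosets_fin.
have Pfin : finite_set (cosets M (psi L1 L2 @` X)) by rewrite -FP; exact: finite_image.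
have sub : cosets M (psi L1 L2 @` X) `<=` phi_sumset L1 L2 X.
  move=> v [w [x Xx <-] <-]; exists (psi L1 L2 x) => //.
  by exists x => //; exists x.
have le : phi_sumset L1 L2 X #<= cosets M (psi L1 L2 @` X).
  by rewrite -FP (card_le_eqr (inj_card_eq Finj)).
have PS := card_le_sub Pfin sub le.
move=> x y Xx Xy.
have : phi_sumset L1 L2 X (coset M (L1 *m x + L2 *m y)).
  by exists (L1 *m x + L2 *m y) => //; exists x => //; exists y.
move/PS => [v [z Xz <-]] /(coset_eqP _ _ Msg) h; exists z; split => //.
by rewrite -opprB; exact: sgN.
Qed.

Lemma main_alg d (L1 L2 : 'M[int]_d) (X : set (Zvec d)) :
  \det L1 != 0 -> \det L2 != 0 ->
  saturated (Gamma1 L1 L2) X -> X 0 -> generates_quot (Gamma1 L1 L2) X ->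
  (forall x y, X x -> X y -> exists z, X z /\
    L1Lambda L1 L2 (L1 *m x + L2 *m y - psi L1 L2 z)) ->
  Lambda L1 L2 `<=` X.
Proof.
move=> n1 n2 hs X0 hgen hP.
set M := L1Lambda L1 L2; set G := Gamma1 L1 L2.
have Msg : subgrp M := M_sg L1 L2.
have Gsg : subgrp G := G1_sg L1 L2.
have MD := sgD Msg; have MN := sgN Msg; have MB := Msg.2.
have eqM a b : M (psi L1 L2 a - psi L1 L2 b) -> eqG L1 L2 a b.
  by move=> h; apply: (proj2 (eqG_M L1 L2 a b)).
have hK g : exists z, M (L1 *m g - psi L1 L2 z).
  pose K := [set g | exists z, M (L1 *m g - psi L1 L2 z)].
  suff : K = setT by move=> KT; have : K g by rewrite KT.
  apply: hgen.
  - by exists 0; rewrite mulmx0 psi0 subr0; exact: Msg.1.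
  - move=> a b [za ha] [zb hb]; exists (za - zb); rewrite mulmxBr psiB.
    rewrite (_ : _ - _ = (L1 *m a - psi L1 L2 za) - (L1 *m b - psi L1 L2 zb)).
      exact: MB.
    zmodtac.
  - by move=> g0 hg; exists 0; rewrite psi0 subr0; exact: (G1_M hg).1.
  - move=> x Xx; have [z [_ hz]] := hP x 0 Xx X0; exists z.
    by rewrite mulmx0 addr0 in hz.
have [al hal] := choice hK.
pose be g := g - al g.
have hbe g : M (L2 *m g - psi L1 L2 (be g)).
  rewrite /be psiB (_ : _ - _ = - (L1 *m g - psi L1 L2 (al g))).
    exact: MN.
  rewrite /psi; zmodtac.
have al_resp a b : eqG L1 L2 a b -> eqG L1 L2 (al a) (al b).
  move=> h; apply: eqM.
  rewrite (_ : psi L1 L2 (al a) - psi L1 L2 (al b) = (L1 *m b - psi L1 L2 (al b)) - (L1 *m a - psi L1 L2 (al a))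
                        + L1 *m (a - b)).
    by apply: (MD); [exact: MB | exact: (G1_M h).1].
  rewrite mulmxBr; zmodtac.
have al_add a b : eqG L1 L2 (al (a + b)) (al a + al b).
  apply: eqM; rewrite psiD.
  rewrite (_ : psi L1 L2 (al (a + b)) - (psi L1 L2 (al a) + psi L1 L2 (al b)) = (L1 *m a - psi L1 L2 (al a)) + (L1 *m b - psi L1 L2 (al b))
                        - (L1 *m (a + b) - psi L1 L2 (al (a + b)))).
    by apply: (MB); [exact: MD|].
  rewrite mulmxDr; zmodtac.
have al_sub a b : eqG L1 L2 (al (a - b)) (al a - al b).
  apply: eqM; rewrite psiB.
  rewrite (_ : psi L1 L2 (al (a - b)) - (psi L1 L2 (al a) - psi L1 L2 (al b)) = (L1 *m a - psi L1 L2 (al a)) - (L1 *m b - psi L1 L2 (al b))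
                        - (L1 *m (a - b) - psi L1 L2 (al (a - b)))).
    by apply: (MB); [exact: MB|].
  rewrite mulmxBr; zmodtac.
have al0 : eqG L1 L2 (al 0) 0.
  apply: eqM; rewrite psi0 subr0 -[psi _ _ _]opprK; apply: (MN).
  by have := hal 0; rewrite mulmx0 sub0r.
have be_resp a b : eqG L1 L2 a b -> eqG L1 L2 (be a) (be b).
  by move=> h; apply: eqG_sub h (al_resp _ _ h).
have be_sub a b : eqG L1 L2 (be (a - b)) (be a - be b).
  apply: eqG_trans (eqG_sub (eqG_refl L1 L2 (a - b)) (al_sub a b)) _.
  rewrite /be (_ : a - b - (al a - al b) = a - al a - (b - al b)).
    exact: eqG_refl.
  zmodtac.
have be_add a b : eqG L1 L2 (be (a + b)) (be a + be b).
  apply: eqG_trans (eqG_sub (eqG_refl L1 L2 (a + b)) (al_add a b)) _.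
  rewrite /be (_ : a + b - (al a + al b) = a - al a + (b - al b)).
    exact: eqG_refl.
  zmodtac.
have be0 : eqG L1 L2 (be 0) 0.
  by rewrite -[X in eqG _ _ _ X]subr0; apply: eqG_sub (eqG_refl _ _ _) al0.
have comm g : eqG L1 L2 (al (be g)) (be (al g)) by exact: al_sub.
have hA x y : X x -> X y -> X (al x + be y).
  move=> Xx Xy; have [z [Xz hz]] := hP x y Xx Xy.
  apply: sat_eqG hs Xz _; apply: eqM; rewrite psiD.
  rewrite (_ : psi L1 L2 (al x) + psi L1 L2 (be y) - psi L1 L2 z =
     (L1 *m x + L2 *m y - psi L1 L2 z) - (L1 *m x - psi L1 L2 (al x))
     - (L2 *m y - psi L1 L2 (be y))).
    by apply: (MB); [apply: (MB)|].
  zmodtac.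
have hXbe y : X y -> X (be y).
  move=> Xy; apply: sat_eqG hs (hA 0 y X0 Xy) _.
  rewrite -[X in eqG _ _ X _]add0r; apply: eqG_add (eqG_sym al0) (eqG_refl _ _ _).
have hXal x : X x -> X (al x).
  move=> Xx; apply: sat_eqG hs (hA x 0 Xx X0) _.
  rewrite -[X in eqG _ _ X _]addr0; apply: eqG_add (eqG_refl _ _ _) (eqG_sym be0).
pose bn k := iter k be.
have bn_resp k a b : eqG L1 L2 a b -> eqG L1 L2 (bn k a) (bn k b).
  by move=> h; elim: k => //= k IH; apply: be_resp.
have bn_sub k a b : eqG L1 L2 (bn k (a - b)) (bn k a - bn k b).
  elim: k => [|k IH]; first exact: eqG_refl.
  exact: eqG_trans (be_resp _ _ IH) (be_sub _ _).
have bn0 k : eqG L1 L2 (bn k 0) 0.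
  by have := bn_sub k 0 0; rewrite !subrr.
have bn_X k u : X u -> X (bn k u).
  by move=> Xu; elim: k => //= k IH; apply: hXbe.
pose C k := cosets G [set bn k u | u in X].
have hC0 : finite_set (C 0%N) by exact: cosets_fin.
have hCdec k : C k.+1 `<=` C k.
  move=> _ [_ [u Xu <-] <-]; exists (bn k (be u)).
    by exists (be u) => //; exact: hXbe.
  by rewrite /bn iterSr.
have [n hn] := stab_chain hC0 hCdec.
have hstab u : X u -> exists u', X u' /\ eqG L1 L2 (bn n u) (be (bn n u')).
  move=> Xu; have : C n (coset G (bn n u)) by exists (bn n u) => //; exists u.
  move/hn => [v [u' Xu' <-]] /(coset_eqP _ _ Gsg) h.
  by exists u'; split => //; apply: eqG_sym.
pose Y := [set v | exists2 u, X u & eqG L1 L2 v (bn n u)].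
have Y_X v : Y v -> X v by move=> [u Xu h]; apply: sat_eqG hs (bn_X n u Xu) h.
have Y_eq v w : Y v -> eqG L1 L2 w v -> Y w.
  by move=> [u Xu h] e; exists u => //; apply: eqG_trans e h.
have Y0 : Y 0 by exists 0 => //; apply: eqG_sym.
have Y_sat v h : Y v -> G h -> Y (v + h).
  move=> Yv Gh; apply: Y_eq Yv _; rewrite /eqG (_ : v + h - v = h) //.
  by rewrite addrC addKr.
have Y_be y : Y y -> exists y', Y y' /\ eqG L1 L2 y (be y').
  move=> [u Xu h]; have [u' [Xu' e]] := hstab u Xu.
  exists (bn n u'); split; first by exists u' => //; exact: eqG_refl.
  exact: eqG_trans h e.
have claim k u y : X u -> Y y ->
    exists w, X w /\ eqG L1 L2 (al (bn k u) + y) (bn k w).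
  elim: k u y => [|k IH] u y Xu Yy.
    have [y' [Yy' e]] := Y_be y Yy.
    exists (al u + y); split; last exact: eqG_refl.
    apply: sat_eqG hs (hA u y' Xu (Y_X _ Yy')) _.
    exact: eqG_add (eqG_refl _ _ _) e.
  have [y' [Yy' e]] := Y_be y Yy.
  have [w [Xw hw]] := IH u y' Xu Yy'.
  exists w; split => //.
  apply: eqG_trans (eqG_add (comm (bn k u)) e) _.
  apply: eqG_trans (eqG_sym (be_add _ _)) _.
  exact: be_resp.
pose T := [set t | forall y, Y y -> Y (y + t)].
have T0 : T 0 by move=> y Yy; rewrite addr0.
have T_add a b : T a -> T b -> T (a + b).
  by move=> ta tb y Yy; rewrite addrA; apply: tb; apply: ta.
have T_G h : G h -> T h by move=> Gh y Yy; apply: Y_sat.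
have T_eq a b : T a -> eqG L1 L2 b a -> T b.
  move=> ta e; rewrite (_ : b = a + (b - a)); last by rewrite addrC addrNK.
  by apply: T_add => //; apply: T_G.
have T_muln t m : T t -> T (t *+ m).
  by move=> tt; elim: m => [|m IH]; [rewrite mulr0n | rewrite mulrS; apply: T_add].
set c := \det L1 * \det L2.
set K := absz (c * c).
have Kgt0 : (0 < K)%N by rewrite absz_gt0 mulf_neq0 // mulf_neq0.
have GK t : G (t *+ K).
  have -> : t *+ K = (c * c) *: t.
    rewrite -scaler_nat; congr (_ *: _).
    by rewrite natz /K gez0_abs // sqr_ge0.
  exact: G1_scale.
have T_neg t : T t -> T (- t).
  move=> tt; apply: T_eq (T_muln t K.-1 tt) _.
  rewrite /eqG (_ : - t - t *+ K.-1 = - (t *+ K)).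
    by apply: (sgN Gsg).
  by rewrite -(prednK Kgt0) mulrS prednK // opprD.
pose K' := [set h | T (al (bn n h))].
have K'T : K' = setT.
  apply: hgen.
  - apply: T_eq T0 _; exact: eqG_trans (al_resp _ _ (bn0 n)) al0.
  - move=> a b ta tb; apply: T_eq (T_add _ _ ta (T_neg _ tb)) _.
    exact: eqG_trans (al_resp _ _ (bn_sub n a b)) (al_sub _ _).
  - move=> h Gh; apply: T_eq T0 _.
    have e : eqG L1 L2 h 0 by rewrite /eqG subr0.
    exact: eqG_trans (al_resp _ _ (eqG_trans (bn_resp n _ _ e) (bn0 n))) al0.
  - move=> u Xu y Yy; have [w [Xw e]] := claim n u y Xu Yy.
    by exists w => //; rewrite addrC.
have lift m g : eqG L1 L2 (al (al g)) 0 -> exists h, eqG L1 L2 (bn m h) g.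
  elim: m g => [|m IH] g hg; first by exists g; exact: eqG_refl.
  have hg' : eqG L1 L2 (al (al (g + al g))) 0.
    apply: eqG_trans (al_resp _ _ (al_add _ _)) _.
    apply: eqG_trans (al_add _ _) _.
    apply: eqG_trans (eqG_add hg (eqG_trans (al_resp _ _ hg) al0)) _.
    by rewrite addr0; exact: eqG_refl.
  have [h hh] := IH _ hg'; exists h.
  apply: eqG_trans (be_resp _ _ hh) _.
  rewrite /be; apply: eqG_trans (eqG_sub (eqG_refl _ _ _) (al_add _ _)) _.
  apply: eqG_trans (eqG_sub (eqG_refl _ _ _) (eqG_add (eqG_refl _ _ (al g)) hg)) _.
  by rewrite addr0 addrK; exact: eqG_refl.
move=> l hl; have [[y ey] [z ez]] := hl.
set g := l + z.
have e1 : eqG L1 L2 (al g) l.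
  apply: eqM.
  rewrite (_ : psi L1 L2 (al g) - psi L1 L2 l = - (L1 *m g - psi L1 L2 (al g))).
    exact: MN.
  by rewrite /g mulmxDr -ez /psi; zmodtac.
have e2 : eqG L1 L2 (al l) 0.
  apply: eqM; rewrite psi0 subr0.
  rewrite (_ : psi L1 L2 (al l) = - (L1 *m l - psi L1 L2 (al l)) + L1 *m l).
    by apply: (MD); [exact: MN | exists l].
  zmodtac.
have [h hh] := lift n g (eqG_trans (al_resp _ _ e1) e2).
have th : T (al (bn n h)) by have : K' h by rewrite K'T.
have tl : T l by apply: T_eq th _; exact: eqG_trans (eqG_sym e1) (al_resp _ _ (eqG_sym hh)).
by apply: Y_X; have := tl 0 Y0; rewrite add0r.
Qed.

Lemma sing_sub d (L1 L2 : 'M[int]_d) :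
  L1 = 0 \/ L2 = 0 -> Lambda L1 L2 `<=` Gamma1 L1 L2.
Proof.
move=> h x hx; split => //; exists 0; split; first exact: (Lam_sg _ _).1.
case: h => [e1|e2]; move: hx => [[y ey] [z ez]].
  by rewrite ez e1 !mul0mx.
by rewrite e2 mul0mx mulmx0.
Qed.

Unset Implicit Arguments.

Theorem lemma4p4 (d : nat) (L1 L2 : 'M[int]_d)
  (hirr : irreducible_pair L1 L2) (hcop : coprime_pair L1 L2)
  (X : set (Zvec d))
  (hXsat : saturated (Gamma1 L1 L2) X) (hX0 : X 0) :
  ~ generates_quot (Gamma1 L1 L2) X
  \/ ~ (card_le (phi_sumset L1 L2 X) (cosets (Gamma1 L1 L2) X))
  \/ Lambda L1 L2 `<=` X.
Proof.
case: (pselect (generates_quot (Gamma1 L1 L2) X)) => [hgen|]; last by left.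
case: (pselect (card_le (phi_sumset L1 L2 X) (cosets (Gamma1 L1 L2) X)))
  => [hcard|]; last by right; left.
right; right.
have [[n1 n2]|sing] : (\det L1 != 0 /\ \det L2 != 0) \/ (L1 = 0 \/ L2 = 0).
  case: (leqP d 1) => hd.
    case: eqP => [/(det_sing01 hd) e1|/eqP n1]; first by right; left.
    case: eqP => [/(det_sing01 hd) e2|/eqP n2]; first by right; right.
    by left.
  by left; split; [exact: irr_det hirr hd | exact: irr_det (irr_sym hirr) hd].
  exact: main_alg n1 n2 hXsat hX0 hgen (card_step n1 n2 hcard).
move=> x /(sing_sub sing) Gx.
by have := hXsat 0 x hX0 Gx; rewrite add0r.
Qed.
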